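(* Let $p\ge 3$. Then every $p$-uniform hypertree is $\mathbb{Z}_2\times\mathbb{Z}_2$-cordial.
   Context: A hypergraph $H=(V,E)$ has edges that are non-empty subsets of $V$; it is $p$-uniform if every edge has exactly $p$ vertices. A walk is a sequence $v_0,e_1,v_1,\dots,e_n,v_n$ with $v_i\in V$, $e_i\in E$ and $v_{i-1},v_i\in e_i$; a path is a walk with all $v_i$ distinct and all $e_i$ distinct; a cycle is a walk with at least two edges, all $e_i$ distinct, and all $v_i$ distinct except $v_0=v_n$. A hypergraph is connected if any two vertices are joined by a path. A hypertree is a finite connected hypergraph with no cycles and at least one edge. Let $A=\mathbb{Z}_2\times\mathbb{Z}_2$. For a labeling $c:V\to A$, write $v_c(a)=|c^{-1}(a)|$; $c$ is $A$-friendly if $|v_c(a)-v_c(b)|\le 1$ for all $a,b\in A$. It induces $c^*:E\to A$, $c^*(e)=\sum_{v\in e}c(v)$; write $e_{c^*}(a)=|(c^* )^{-1}(a)|$. $H$ is $A$-cordial if it admits an $A$-friendly labeling $c$ with $|e_{c^*}(a)-e_{c^*}(b)|\le 1$ for all $a,b\in A$. *)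

(* Defs.v *)
From HB Require Import structures.
From mathcomp Require Import all_boot all_order all_algebra.
Set Implicit Arguments. Unset Strict Implicit. Unset Printing Implicit Defensive.
Import GRing.Theory.

Definition is_hypergraph (V : finType) (E : {set {set V}}) : Prop :=
  forall e, e \in E -> e != set0.

Definition uniform (V : finType) (E : {set {set V}}) (p : nat) : Prop :=
  forall e, e \in E -> #|e| = p.

(* A walk v0, e1, v1, ..., en, vn is encoded by v0 and s = [:: (e1,v1); ...; (en,vn)]. *)
Fixpoint walk_from (V : finType) (E : {set {set V}}) (x : V) (s : seq ({set V} * V)) : bool :=
  if s is (e, y) :: s' then [&& e \in E, x \in e, y \in e & walk_from E y s'] else true.

Definition is_walk (V : finType) (E : {set {set V}}) (v0 : V) (s : seq ({set V} * V)) : bool :=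
  walk_from E v0 s.

Definition is_path (V : finType) (E : {set {set V}}) (v0 : V) (s : seq ({set V} * V)) : bool :=
  [&& is_walk E v0 s, uniq (v0 :: map snd s) & uniq (map fst s)].

Definition is_cycle (V : finType) (E : {set {set V}}) (v0 : V) (s : seq ({set V} * V)) : bool :=
  [&& is_walk E v0 s, 2 <= size s, uniq (map fst s),
      uniq (belast v0 (map snd s)) & last v0 (map snd s) == v0].

Definition hconnected (V : finType) (E : {set {set V}}) : Prop :=
  forall x y : V, exists s, is_path E x s /\ last x (map snd s) = y.

Definition hypertree (V : finType) (E : {set {set V}}) : Prop :=
  [/\ is_hypergraph E, hconnected E,
      (forall v0 s, ~ is_cycle E v0 s) & E != set0].

Definition A := ('Z_2 * 'Z_2)%type.

Definition vcount (V : finType) (c : V -> A) (a : A) : nat := #|[set v | c v == a]|.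

Definition cstar (V : finType) (c : V -> A) (e : {set V}) : A := (\sum_(v in e) c v)%R.

Definition ecount (V : finType) (E : {set {set V}}) (c : V -> A) (a : A) : nat :=
  #|[set e in E | cstar c e == a]|.

(* |x - y| <= 1 for naturals, written as x <= y + 1 (for all ordered pairs) *)
Definition friendly (V : finType) (c : V -> A) : Prop :=
  forall a b : A, vcount c a <= vcount c b + 1.

Definition cordial (V : finType) (E : {set {set V}}) : Prop :=
  exists c : V -> A, friendly c /\ forall a b : A, ecount E c a <= ecount E c b + 1.

(* Main.v *)
Require Import Defs.
From HB Require Import structures.
From mathcomp Require Import all_boot all_order all_algebra.
From mathcomp Require Import zify ring.
Set Implicit Arguments. Unset Strict Implicit. Unset Printing Implicit Defensive.
Import GRing.Theory.
Local Open Scope ring_scope.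

Definition a1 : A := (1, 0).
Definition a2 : A := (0, 1).
Definition a3 : A := (1, 1).

Lemma elemA (x : A) : [\/ x = 0, x = a1, x = a2 | x = a3].
Proof.
case: x => [[[|[|//]] p1] [[|[|//]] p2]].
- by constructor 1; congr pair; apply/val_inj.
- by constructor 3; congr pair; apply/val_inj.
- by constructor 2; congr pair; apply/val_inj.
- by constructor 4; congr pair; apply/val_inj.
Qed.

Lemma addAA (x : A) : x + x = 0.
Proof. by apply/eqP; case: (elemA x) => ->; vm_compute. Qed.

Lemma oppA (x : A) : - x = x.
Proof. by apply: (addrI x); rewrite subrr addAA. Qed.

Lemma bigA_all (R : Type) (idx : R) (op : Monoid.com_law idx) (F : A -> R) :
  \big[op/idx]_(a : A) F a = op (F 0) (op (F a1) (op (F a2) (op (F a3) idx))).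
Proof.
have U : uniq [:: 0; a1; a2; a3] by vm_compute.
rewrite (eq_bigl (mem [:: 0; a1; a2; a3])); last first.
  by move=> x; case: (elemA x) => ->.
by rewrite -big_uniq // !big_cons big_nil.
Qed.

Lemma sumA : \sum_(a : A) a = 0.
Proof. by apply/eqP; rewrite bigA_all; vm_compute. Qed.

Lemma card_A : #|{: A}| = 4%N.
Proof. by rewrite card_prod card_ord. Qed.

Lemma avoidA (l : seq A) : (size l < 4)%N -> exists x, x \notin l.
Proof.
move=> Hs; apply/existsP; rewrite -negb_forall; apply/negP => /forallP H.
have U : uniq [:: (0:A); a1; a2; a3] by vm_compute.
have := uniq_leq_size U (fun x _ => H x).
by rewrite leqNgt Hs.
Qed.

Definition sig (S : {set A}) : A := \sum_(a in S) a.

Lemma sig0 : sig set0 = 0. Proof. by rewrite /sig big_set0. Qed.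
Lemma sig1 w : sig [set w] = w. Proof. by rewrite /sig big_set1. Qed.
Lemma sig2 u w : u != w -> sig [set u; w] = u + w.
Proof. by move=> H; rewrite /sig big_setU1 ?big_set1 // in_set1. Qed.
Lemma sigC1 w : sig (~: [set w]) = w.
Proof.
have := sumA; rewrite (bigD1 w) //= => H.
rewrite /sig (eq_bigl (fun a => a != w)); last by move=> a; rewrite in_setC in_set1.
by apply: (addrI w); rewrite H addAA.
Qed.
Lemma cardC1A (w : A) : #|~: [set w]| = 3%N.
Proof. by rewrite cardsCs setCK cards1 card_A. Qed.

Lemma sum_count (L : seq A) : \sum_(x <- L) x = \sum_(a : A) a *+ count_mem a L.
Proof.
elim: L => [|x L IH]; first by rewrite big_nil big1.
have -> : \sum_(a : A) a *+ count_mem a (x :: L) =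
   \sum_(a:A) (a *+ (x == a) + a *+ count_mem a L).
  by apply: eq_bigr => a _; rewrite /= mulrnDr.
rewrite big_cons IH big_split /=; congr (_ + _).
apply/eqP; rewrite bigA_all; case: (elemA x) => ->; vm_compute; done.
Qed.

Ltac bruteA := repeat match goal with x : A |- _ => move: x; let x' := fresh in move=> x'; case: (elemA x') => ->; clear x' end; vm_compute; reflexivity.

Lemma hA (a b f : A) : (a != b + f) = (b + a != f).
Proof. bruteA. Qed.
Lemma hB (w x K : A) : (w + x != K + w) = (x != K).
Proof. bruteA. Qed.
Lemma hC (c0 x s : A) : (c0 + x != s) = (x != c0 + s).
Proof. bruteA. Qed.
Lemma hD (X u w : A) : (w != u + X) = (X != u + w).
Proof. bruteA. Qed.
Lemma hE (x z : A) : (x + z + a1) + x != z.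
Proof. bruteA. Qed.
Lemma hE' (x z : A) : x + (x + z + a1) != z.
Proof. bruteA. Qed.
Lemma hG (y u w : A) : (w != u) ==> (y + y != u + w).
Proof. bruteA. Qed.
Lemma hH (x y : A) : (x + y == 0) = (x == y).
Proof. bruteA. Qed.

Lemma phase k q bV bE r e : (2 <= q -> 4 * bV + r = 1 + k * q -> 4 * bE + e = k ->
  r <= 3 -> e <= 3 ->
  [/\ k %% 4 = e,
      ((r + q) %% 4 = 2 -> e <= 2),
      (r + q = 3 -> e <= 2),
      ((r + q) %% 4 = 0 -> e = 0 \/ (q %% 4 = 1 /\ e = 2)) &
      (q %% 4 = 1 -> (e = 0 -> r = 1) /\ (e = 1 -> r = 2))])%N.
Proof.
move=> Hq H1 H2 Hr He; subst k.
rewrite mulnDl -mulnA in H1.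
move: H1; set X := (bE * q)%N => H1.
case: e He H1 => [|[|[|[|//]]]] _ H1; rewrite ?mul0n ?mul1n in H1; split; lia.
Qed.

Lemma GC q (SV SE : {set A}) (c0 : A) : (2 <= q)%N -> (#|SV| <= 3)%N -> (#|SE| <= 3)%N ->
  ((#|SV| + q) %% 4 = 2 -> #|SE| <= 2)%N -> (#|SV| + q = 3 -> #|SE| <= 2)%N ->
  (((#|SV| + q) %% 4 = 0)%N -> c0 + sig SV \notin SE) ->
  exists (S' : {set A}) d t, [/\ (4 * d + #|S'| = q + #|SV|)%N, (#|S'| <= 3)%N,
     (forall a, a \in SV -> a \notin S' -> 0 < d)%N, t \notin SE &
     t = c0 + sig SV + sig S'].
Proof.
move=> Hq HV HE H2 H3 H0.
have HSE : size (enum SE) = #|SE| by rewrite cardE.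
have HSV : size (enum SV) = #|SV| by rewrite cardE.
case E: ((#|SV| + q) %% 4)%N => [|[|[|[|m]]]].
- exists set0, ((q + #|SV|) %/ 4)%N, (c0 + sig SV); split.
  + by rewrite cards0; lia.
  + by rewrite cards0.
  + move=> a _ _; lia.
  + exact: (H0 E).
  + by rewrite sig0 addr0.
- have Hs : (size (enum SE) < 4)%N by rewrite -cardE; lia.
  have [t Ht] := avoidA Hs.
  exists [set t - (c0 + sig SV)], ((q + #|SV| - 1) %/ 4)%N, t; split.
  + by rewrite cards1; lia.
  + by rewrite cards1.
  + move=> a _ _; lia.
  + by rewrite mem_enum in Ht.
  + by rewrite sig1; ring.
- have Hs : (size ((c0 + sig SV)%R :: enum SE) < 4)%N.
    by rewrite /= -cardE !ltnS; apply: H2.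
  have [t Ht] := avoidA Hs.
  set g := t - (c0 + sig SV).
  have Hg : (0 : A) != g.
    apply/eqP => Hg0; move: Ht; rewrite inE.
    have -> : t = c0 + sig SV by apply/eqP; rewrite -subr_eq0 -/g -Hg0.
    by rewrite eqxx.
  exists ([set (0 : A); (g : A)] : {set A}), ((q + #|SV| - 2) %/ 4)%N, t; split.
  + by rewrite cards2 Hg; lia.
  + by rewrite cards2 Hg.
  + move=> a Ha _; case: (posnP ((q + #|SV| - 2) %/ 4)%N) => // Hd.
    have : #|SV| = 0%N by lia.
    by move/cards0_eq => E0; rewrite E0 inE in Ha.
  + by move: Ht; rewrite inE mem_enum negb_or => /andP [].
  + by rewrite sig2 // add0r /g; ring.
- set l := enum SE ++ (if (#|SV| + q == 3)%N then map (fun u => c0 + sig SV + u) (enum SV) else [::]).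
  have Hl : (size l < 4)%N.
    rewrite /l size_cat HSE; case: eqP => H; last by rewrite addn0 ltnS.
    by rewrite size_map HSV; have := H3 H; lia.
  have [t Ht] := avoidA Hl.
  set w := t - (c0 + sig SV).
  exists (~: [set w]), ((q + #|SV| - 3) %/ 4)%N, t; split.
  + by rewrite cardC1A; lia.
  + by rewrite cardC1A.
  + move=> a Ha; rewrite in_setC in_set1 negbK => /eqP Haw.
    case: (posnP ((q + #|SV| - 3) %/ 4)%N) => // Hd.
    have H3' : (#|SV| + q == 3)%N by apply/eqP; lia.
    move: Ht; rewrite /l mem_cat H3' negb_or => /andP [_].
    have -> : t = c0 + sig SV + a by rewrite Haw /w; ring.
    by rewrite map_f // mem_enum.
  + by move: Ht; rewrite /l mem_cat mem_enum negb_or => /andP [].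
  + by rewrite sigC1 /w; ring.
- have : ((#|SV| + q) %% 4 < 4)%N by apply: ltn_pmod.
  by rewrite E.
Qed.

Lemma mod_fact1 k : (k %% 4 = 0 -> k.+1 %% 4 = 1)%N.
Proof. lia. Qed.
Lemma mod_fact2 k : (k %% 4 = 1 -> k.+1 %% 4 = 2)%N.
Proof. lia. Qed.
Lemma mod_fact3 k : (2 <= k %% 4 -> (k.+1 %% 4 != 1) && (k.+1 %% 4 != 2))%N.
Proof. move=> H; apply/andP; split; apply/eqP; lia. Qed.
Lemma qd_fact q : (2 <= q -> q %% 4 = 1 ->
  [/\ 1 <= (q - 1) %/ 4, 4 * ((q - 1) %/ 4) + 2 = q + 1 & 4 * ((q - 1) %/ 4) + 3 = q + 2])%N.
Proof. move=> H1 H2; split; lia. Qed.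

Definition mk (k : A -> nat) : seq A :=
  nseq (k 0) 0 ++ nseq (k a1) a1 ++ nseq (k a2) a2 ++ nseq (k a3) a3.

Lemma count_mk k x : count_mem x (mk k) = k x.
Proof.
rewrite /mk !count_cat !count_nseq.
by case: (elemA x) => -> /=; rewrite ?mul0n ?mul1n ?addn0 ?add0n.
Qed.

Lemma size_mk k : size (mk k) = (\sum_(a : A) k a)%N.
Proof. by rewrite bigA_all /mk !size_cat !size_nseq /= addn0. Qed.

Lemma sum_mk k : \sum_(x <- mk k) x = \sum_(a : A) a *+ k a.
Proof. by rewrite sum_count; apply: eq_bigr => a _; rewrite count_mk. Qed.

Section Assign.
Variables (V : finType) (c : V -> A) (B : {set V}) (r : V).

Lemma assign (l0 : seq V) (L0 R : seq A) :
  uniq l0 -> {subset l0 <= B} -> size L0 = size l0 -> size (L0 ++ R) = #|B| ->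
  exists f : V -> A, [/\ (forall v, v \notin B -> f v = c v),
     (forall i, (i < size l0)%N -> f (nth r l0 i) = nth 0 L0 i),
     (forall a, #|[set v in B | f v == a]| = count_mem a (L0 ++ R)) &
     \sum_(v in B) f v = \sum_(x <- L0 ++ R) x].
Proof.
move=> Ul0 Sl0 HL0 HLf.
set Lf := L0 ++ R.
set rest := [seq v <- enum B | v \notin l0].
set l := l0 ++ rest.
have Ul : uniq l.
  rewrite cat_uniq Ul0 filter_uniq ?enum_uniq // andbT.
  by apply/hasPn => v; rewrite mem_filter => /andP [].
have Ml : l =i B.
  move=> v; rewrite mem_cat mem_filter mem_enum.
  by case: (boolP (v \in l0)) => [/Sl0 -> //| _ ].
have Sl : size l = #|B|.
  rewrite cardE; apply: perm_size; apply: uniq_perm => //; first exact: enum_uniq.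
  by move=> v; rewrite Ml mem_enum.
set g := fun v => nth 0 Lf (index v l).
have Mg : map g l = Lf.
  apply: (@eq_from_nth _ 0); first by rewrite size_map Sl HLf.
  move=> i; rewrite size_map => Hi.
  by rewrite (nth_map r) // /g index_uniq.
exists (fun v => if v \in B then g v else c v); split.
- by move=> v /negbTE ->.
- move=> i Hi.
  have E : nth r l0 i = nth r l i by rewrite /l nth_cat Hi.
  have Hil : (i < size l)%N by rewrite /l size_cat (leq_trans Hi) ?leq_addr.
  rewrite E -Ml mem_nth // /g index_uniq //.
  by rewrite /Lf nth_cat HL0 Hi.
- move=> a.
  have -> : #|[set v in B | (if v \in B then g v else c v) == a]| =
            #|[pred v in [seq v <- l | g v == a]]|.
    apply: eq_card => v; rewrite inE mem_filter -Ml.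
    by case: (boolP (v \in l)) => H; rewrite ?andbT ?andbF //= H.
  rewrite (card_uniqP (filter_uniq _ Ul)) size_filter -Mg count_map.
  by apply: eq_count.
- rewrite -Mg big_map.
  rewrite big_uniq //; apply: eq_big => v; first by rewrite Ml.
  by move=> ->.
Qed.
End Assign.

Lemma size_count (L : seq A) : size L = (\sum_(a : A) count_mem a L)%N.
Proof.
elim: L => [|x L IH]; first by rewrite big1.
rewrite /= IH.
have -> : (\sum_(a : A) ((x == a) + count_mem a L) = \sum_(a : A) (x == a) + \sum_(a : A) count_mem a L)%N.
  by rewrite big_split.
have -> : (\sum_(a:A) (x == a) = 1)%N.
  by rewrite bigA_all; case: (elemA x) => ->; vm_compute.
by rewrite add1n.
Qed.

Lemma card_sum (S : {set A}) : (\sum_(a : A) (a \in S) = #|S|)%N.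
Proof.
rewrite -sum1_card [RHS]big_mkcond /=; apply: eq_bigr => a _.
by case: (a \in S).
Qed.

Lemma sig_sum (S : {set A}) : \sum_(a : A) a *+ (a \in S) = sig S.
Proof.
rewrite /sig [RHS]big_mkcond /=; apply: eq_bigr => a _.
by case: (a \in S).
Qed.

Definition bb d (S S' : {set A}) (a : A) : nat :=
  if a \in S then (if a \in S' then d else d.-1) else (if a \in S' then d.+1 else d).

Lemma bbE d (S S' : {set A}) (a : A) : (a \in S -> a \notin S' -> 0 < d)%N ->
  (bb d S S' a + (a \in S) = d + (a \in S'))%N.
Proof.
rewrite /bb; case: (a \in S); case: (a \in S') => /= H.
- by [].
- by have := H isT isT; case: d {H} => // d _; rewrite addn1 addn0.
- by rewrite addn0 addn1.
- by [].
Qed.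

Lemma sum_bb d (S S' : {set A}) q :
  (4 * d + #|S'| = q + #|S|)%N -> (forall a, a \in S -> a \notin S' -> 0 < d)%N ->
  (\sum_(a : A) bb d S S' a = q)%N.
Proof.
move=> H1 H2.
have E : (\sum_(a : A) (bb d S S' a + (a \in S)) = \sum_(a : A) (d + (a \in S')))%N.
  by apply: eq_bigr => a _; rewrite bbE //; apply: H2.
rewrite !big_split /= !card_sum in E.
have E4 : (\sum_(a : A) d = 4 * d)%N by rewrite bigA_all /= addn0 mulSn mulSn mulSn mul1n.
rewrite E4 in E. by apply/eqP; rewrite -(eqn_add2r #|S|) E H1.
Qed.

Lemma sig_bb d (S S' : {set A}) :
  (forall a, a \in S -> a \notin S' -> 0 < d)%N ->
  \sum_(a : A) a *+ bb d S S' a = sig S + sig S'.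
Proof.
move=> H2.
have E : \sum_(a : A) (a *+ bb d S S' a + a *+ (a \in S)) =
         \sum_(a : A) (a *+ d + a *+ (a \in S')).
  by apply: eq_bigr => a _; rewrite -!mulrnDr bbE //; apply: H2.
move: E; rewrite !big_split /= !sig_sum sumrMnl sumA mul0rn add0r => E.
by rewrite -E addrC addrA addAA add0r.
Qed.



Section Label.
Variables (V : finType) (r : V) (s : seq {set V}) (q : nat).
Hypothesis Hq : (2 <= q)%N.
Fact U_key : unit. Proof. exact: tt. Qed.
Definition U : nat -> {set V} :=
  locked_with U_key (fun k => r |: [set v : V | has (fun e : {set V} => v \in e) (take k s)]).
Lemma UE k : U k = r |: [set v : V | has (fun e : {set V} => v \in e) (take k s)].
Proof. by rewrite /U; case: U_key. Qed.
Definition ed k := nth set0 s k.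
Definition par k := odflt r [pick v in ed k :&: U k].
Definition blk k := ed k :\: U k.
Hypothesis Hgood : forall k, (k < size s)%N -> #|ed k :&: U k| = 1%N.
Hypothesis Hsz : forall k, (k < size s)%N -> #|ed k| = q.+1.

Lemma U0 : U 0 = [set r].
Proof. by apply/setP => v; rewrite UE !inE take0 /= orbF. Qed.

Lemma parP k : (k < size s)%N -> ed k :&: U k = [set par k].
Proof.
move=> Hk; have /cards1P [x Ex] : #|ed k :&: U k| == 1%N by rewrite Hgood.
rewrite /par; case: pickP => [v Hv|]; last by move/(_ x); rewrite Ex inE eqxx.
by move: Hv; rewrite Ex inE => /eqP ->.
Qed.

Lemma par_ed k : (k < size s)%N -> par k \in ed k.
Proof. by move=> Hk; have := set11 (par k); rewrite -parP // inE => /andP []. Qed.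
Lemma par_U k : (k < size s)%N -> par k \in U k.
Proof. by move=> Hk; have := set11 (par k); rewrite -parP // inE => /andP []. Qed.

Lemma blk_U k v : v \in blk k -> v \notin U k.
Proof. by rewrite inE => /andP []. Qed.

Lemma U_S k : (k < size s)%N -> U k.+1 = U k :|: blk k.
Proof.
move=> Hk; apply/setP => v; rewrite !UE (take_nth set0 Hk) !inE has_rcons -/(ed k).
rewrite UE !inE. set h := has _ _; set x := (v \in ed k); by case: (v == r); case: x; case: h.
Qed.

Lemma card_blk k : (k < size s)%N -> #|blk k| = q.
Proof. by move=> Hk; rewrite /blk cardsD Hgood // Hsz // subSS subn0. Qed.

Lemma sub_U k e v : e \in take k s -> v \in e -> v \in U k.
Proof.
move=> He Hv; rewrite UE !inE; apply/orP; right; apply/hasP; by exists e.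
Qed.

Definition vc (c : V -> A) (X : {set V}) (a : A) := #|[set v in X | c v == a]|.
Definition ec (c : V -> A) k (a : A) := count (fun e => cstar c e == a) (take k s).

Lemma ed_split k : (k < size s)%N -> ed k = par k |: blk k.
Proof.
move=> Hk; apply/setP => v; rewrite in_setU1 /blk in_setD.
case: (eqVneq v (par k)) => [->|Hne] /=; first by rewrite par_ed.
case: (boolP (v \in U k)) => HU //=.
apply/negP => Hv; have : v \in ed k :&: U k by rewrite inE Hv HU.
by rewrite parP // inE (negbTE Hne).
Qed.

Lemma cstar_ed c k : (k < size s)%N ->
  cstar c (ed k) = c (par k) + \sum_(v in blk k) c v.
Proof.
move=> Hk; rewrite /cstar (ed_split Hk) big_setU1 //.
by rewrite inE (par_U Hk).
Qed.

Lemma vc_S c c' k a : (k < size s)%N -> (forall v, v \in U k -> c' v = c v) ->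
  vc c' (U k.+1) a = (vc c (U k) a + #|[set v in blk k | c' v == a]|)%N.
Proof.
move=> Hk Hc; rewrite /vc (U_S Hk).
have -> : [set v in U k :|: blk k | c' v == a] =
   [set v in U k | c v == a] :|: [set v in blk k | c' v == a].
  apply/setP => v; rewrite !inE; case: (boolP (v \in U k)) => HU /=.
    by rewrite Hc ?orbF.
  by [].
rewrite cardsU; have -> : [set v in U k | c v == a] :&: [set v in blk k | c' v == a] = set0.
  by apply/setP => v; rewrite !inE; case: (v \in U k); rewrite /= ?andbF.
by rewrite cards0 subn0.
Qed.

Lemma ec_S c c' k a : (k < size s)%N -> (forall v, v \in U k -> c' v = c v) ->
  ec c' k.+1 a = (ec c k a + (cstar c' (ed k) == a))%N.
Proof.
move=> Hk Hc; rewrite /ec (take_nth set0 Hk) -cats1 count_cat /= addn0 -/(ed k).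
congr (_ + _)%N; apply: eq_in_count => e He /=.
congr (_ == _); rewrite /cstar; apply: eq_bigr => v Hv.
by apply: Hc; apply: (sub_U He).
Qed.


Definition Inv6 k c bV (SV : {set A}) bE (SE : {set A}) :=
  [/\ (forall a, vc c (U k) a = bV + (a \in SV))%N, (#|SV| <= 3)%N,
      (4 * bV + #|SV| = 1 + k * q)%N,
      (forall a, ec c k a = bE + (a \in SE))%N &
      ((#|SE| <= 3)%N /\ (4 * bE + #|SE| = k)%N)].

Lemma setT_of (X : {set A}) : #|X| = 4%N -> forall a, a \in X.
Proof.
move=> H a; have : #|~: X| = 0%N.
  by have := cardsC X; rewrite card_A H => /eqP; rewrite -{2}(addn0 4%N) eqn_add2l => /eqP.
by move/cards0_eq => E; apply/negPn; rewrite -in_setC E inE.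
Qed.

Lemma gstep k c bV SV bE SE (S' : {set A}) d t (l0 : seq V) (L0 : seq A) :
  (k < size s)%N -> Inv6 k c bV SV bE SE ->
  (4 * d + #|S'| = q + #|SV|)%N -> (#|S'| <= 3)%N ->
  (forall a, a \in SV -> a \notin S' -> 0 < d)%N ->
  t \notin SE -> t = c (par k) + sig SV + sig S' ->
  uniq l0 -> {subset l0 <= blk k} -> size L0 = size l0 ->
  (forall a, count_mem a L0 <= bb d SV S' a)%N ->
  exists c', [/\ forall v, v \notin blk k -> c' v = c v,
    forall i, (i < size l0)%N -> c' (nth r l0 i) = nth 0 L0 i &
    Inv6 k.+1 c' (bV + d) S' (if #|SE| == 3%N then bE.+1 else bE)
       (if #|SE| == 3%N then set0 else t |: SE)].
Proof.
move=> Hk [IV1 IV2 IV3 IE1 [IE2 IE3]] H1 H2 H3 Ht1 Ht2 Ul0 Sl0 HL0 HcL0.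
set R := mk (fun a => bb d SV S' a - count_mem a L0)%N.
have CL : forall a, count_mem a (L0 ++ R) = bb d SV S' a.
  by move=> a; rewrite count_cat count_mk subnKC.
have SL : size (L0 ++ R) = #|blk k|.
  rewrite card_blk // size_count (eq_bigr _ (fun a _ => CL a)).
  exact: sum_bb.
have [f [Hf1 Hf2 Hf3 Hf4]] := assign c r Ul0 Sl0 HL0 SL.
exists f; split => //.
have HU : forall v, v \in U k -> f v = c v.
  by move=> v Hv; apply: Hf1; apply/negP => /blk_U; rewrite Hv.
have Hcs : cstar f (ed k) = t.
  rewrite cstar_ed // Hf4 sum_count (eq_bigr _ (fun a _ => congr1 (GRing.natmul a) (CL a))).
  by rewrite sig_bb // Ht2 HU ?par_U // addrA.
split.
- move=> a; rewrite (vc_S _ Hk HU) IV1 Hf3 CL; have := @bbE d SV S' a (H3 a); move: (a \in SV) (a \in S') (bb d SV S' a) => x y z; lia.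
- exact: H2.
- by rewrite mulSn; lia.
- move=> a; rewrite (ec_S _ Hk HU) IE1 Hcs.
  case: (eqVneq #|SE| 3%N) => H3E /=.
    have HT : forall b, b \in t |: SE by apply: setT_of; rewrite cardsU1 Ht1 H3E.
    rewrite in_set0 addn0.
    suff E1 : ((a \in SE) + (t == a) = 1)%N by rewrite -addnA E1 addn1.
    have := HT a; rewrite in_setU1.
    case: (eqVneq a t) => [->|Hat] /=; first by rewrite (negbTE Ht1).
    by move=> ->.
  rewrite in_setU1 -addnA; congr (_ + _)%N.
  case: (eqVneq a t) => [->|Hat] /=; first by rewrite (negbTE Ht1).
  by rewrite addn0.
- split.
  + case: (eqVneq #|SE| 3%N) => H3E /=; first by rewrite cards0.
    by rewrite cardsU1 Ht1; lia.
  + case: (eqVneq #|SE| 3%N) => H3E /=; first by rewrite cards0; lia.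
    by rewrite cardsU1 Ht1; lia.
Qed.

Definition Cond k (c : V -> A) (SV SE : {set A}) : Prop :=
  (q %% 4 = 1)%N ->
  ((k %% 4 = 1)%N -> (k.+1 < size s)%N -> par k.+1 \in U k ->
       c (par k) + c (par k.+1) != sig SV) /\
  ((k %% 4 = 2)%N -> (k < size s)%N -> sig SV + c (par k) \notin SE).

Definition Inv k c := exists bV SV bE SE, Inv6 k c bV SV bE SE /\ Cond k c SV SE.

Lemma U_S_or k v : (k < size s)%N -> v \in U k.+1 -> v \notin blk k -> v \in U k.
Proof. by move=> Hk; rewrite (U_S Hk) in_setU => /orP [] // ->. Qed.

Lemma step_gen k c bV SV bE SE : (k < size s)%N -> Inv6 k c bV SV bE SE ->
  Cond k c SV SE -> ((q %% 4 = 1)%N -> (2 <= k %% 4)%N) -> exists c', Inv k.+1 c'.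
Proof.
move=> Hk HI HC Hph; have HI' := HI; case: HI' => [IV1 IV2 IV3 IE1 [IE2 IE3]].
have [Pk P2 P3 P0 P1] := phase Hq IV3 IE3 IV2 IE2.
have [S' [d [t [H1 H2 H3 Ht1 Ht2]]]] := @GC q SV SE (c (par k)) Hq IV2 IE2 P2 P3
   (fun H => match P0 H with
             | or_introl He => ltac:(by rewrite (cards0_eq He) inE)
             | or_intror (conj Hq1 He) => ltac:(by rewrite addrC; apply: (proj2 (HC Hq1)); lia)
             end).
have U0' : uniq ([::] : seq V) by [].
have [c' [_ _ HI2]] := @gstep k c bV SV bE SE S' d t [::] [::] Hk HI H1 H2 H3 Ht1 Ht2
   U0' (fun x (H : x \in [::]) => ltac:(by [])) erefl (fun a => leq0n _).
exists c', (bV + d)%N, S', (if #|SE| == 3%N then bE.+1 else bE), (if #|SE| == 3%N then set0 else t |: SE); split; first exact: HI2.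
move=> Hq1; have /andP [N1 N2] := mod_fact3 (Hph Hq1).
by split => H0; [rewrite H0 in N1 | rewrite H0 in N2].
Qed.

Lemma step0 k c bV SV bE SE : (k < size s)%N -> Inv6 k c bV SV bE SE ->
  (q %% 4 = 1)%N -> (k %% 4 = 0)%N -> #|SV| = 1%N -> #|SE| = 0%N ->
  exists c', Inv k.+1 c'.
Proof.
move=> Hk HI Hq1 Hk0 HV1 HE0.
have [u Eu] : exists u, SV = [set u] by apply/cards1P; rewrite HV1.
have ESE : SE = set0 by apply: cards0_eq.
set v1 := par k.+1; set v2 := par k.+2.
set P := (k.+2 < size s)%N && (v2 \in U k.+1).
set X := if [&& P, v1 \in U k & v2 \in U k] then c v1 + c v2 else 0.
have [w Hw] := @avoidA [:: u; u + X] isT.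
have Hwu : w != u by move: Hw; rewrite !inE negb_or => /andP [].
have HwX : w != u + X by move: Hw; rewrite !inE negb_or => /andP [].
set S' : {set A} := [set u; w].
have sigS' : sig S' = u + w by rewrite sig2 // eq_sym.
set d := ((q - 1) %/ 4)%N.
have [Hd Hd2 _] := qd_fact Hq Hq1.
have H1 : (4 * d + #|S'| = q + #|SV|)%N.
  by rewrite cards2 eq_sym Hwu HV1 /d /=; lia.
have H2 : (#|S'| <= 3)%N by rewrite cards2 eq_sym Hwu /=.
have H3 : forall a, a \in SV -> a \notin S' -> (0 < d)%N by [].
set t := c (par k) + sig SV + sig S'.
have Ht1 : t \notin SE by rewrite ESE inE.
have bb1 : forall a, (1 <= bb d SV S' a)%N.
  move=> a; rewrite /bb Eu in_set1; case: (eqVneq a u) => [->|Hau] /=.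
    by rewrite /S' !inE eqxx.
  by case: (a \in S').
have bbw : (2 <= bb d SV S' w)%N.
  by rewrite /bb Eu in_set1 (negbTE Hwu) /S' !inE eqxx orbT.
have gs := fun l0 L0 => @gstep k c bV SV bE SE S' d t l0 L0 Hk HI H1 H2 H3 Ht1 erefl.
have fin : forall c', (forall v, v \notin blk k -> c' v = c v) ->
    Inv6 k.+1 c' (bV + d) S' (if #|SE| == 3%N then bE.+1 else bE)
       (if #|SE| == 3%N then set0 else t |: SE) ->
    (P -> c' v1 + c' v2 != u + w) -> exists c'', Inv k.+1 c''.
  move=> c' _ HI2 HP; exists c', (bV + d)%N, S', (if #|SE| == 3%N then bE.+1 else bE), (if #|SE| == 3%N then set0 else t |: SE); split; first exact: HI2.
  move=> _; split; last by rewrite (mod_fact1 Hk0).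
  move=> _ Hk2 Hv2; rewrite sigS'; apply: HP; by rewrite /P Hk2 Hv2.
have Hk1 : (k.+1 < size s)%N -> v1 \in U k.+1 by move=> H; apply: par_U.
case HP: P; last first.
  have [c' [Hc1 _ HI2]] := gs [::] [::] isT (fun x (H : x \in [::]) => ltac:(by [])) erefl (fun a => leq0n _).
  by apply: (fin c') => //; rewrite HP.
move: (HP); rewrite /P => /andP [Hk2 HV2].
have HV1' : v1 \in U k.+1 by apply: Hk1; apply: ltnW.
case B1: (v1 \in blk k); case B2: (v2 \in blk k).
- case: (eqVneq v1 v2) => [E12|N12].
  + have [c' [Hc1 _ HI2]] := gs [::] [::] isT (fun x (H : x \in [::]) => ltac:(by [])) erefl (fun a => leq0n _).
    apply: (fin c') => // _; rewrite -E12.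
    by have := hG (c' v1) u w; rewrite Hwu.
  + have U2 : uniq [:: v1; v2] by rewrite /= inE N12.
    have S2 : {subset [:: v1; v2] <= blk k} by move=> x; rewrite !in_cons in_nil orbF => /orP [] /eqP ->; [exact: B1 | exact: B2].
    have C2 : forall a, (count_mem a [:: w; w] <= bb d SV S' a)%N.
      move=> a /=; case: (eqVneq w a) => [<-|] //=; by rewrite addn0.
    have [c' [Hc1 Hc2 HI2]] := gs [:: v1; v2] [:: w; w] U2 S2 erefl C2.
    apply: (fin c') => // _.
    have -> : c' v1 = w by apply: (Hc2 0%N).
    have -> : c' v2 = w by apply: (Hc2 1%N).
    by have := hG w u w; rewrite Hwu.
- have HV2k : v2 \in U k by apply: U_S_or => //; rewrite B2.
  set y := c v2 + (u + w) + a1.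
  have C1 : forall a, (count_mem a [:: y] <= bb d SV S' a)%N.
    by move=> a /=; rewrite addn0; case: (y == a) => //.
  have S1 : {subset [:: v1] <= blk k} by move=> x; rewrite in_cons in_nil orbF => /eqP ->; exact: B1.
  have [c' [Hc1 Hc2 HI2]] := gs [:: v1] [:: y] isT S1 erefl C1.
  apply: (fin c') => // _.
  have -> : c' v1 = y by apply: (Hc2 0%N).
  rewrite (Hc1 v2) ?B2 //; exact: hE.
- have HV1k : v1 \in U k by apply: U_S_or => //; rewrite B1.
  set y := c v1 + (u + w) + a1.
  have C1 : forall a, (count_mem a [:: y] <= bb d SV S' a)%N.
    by move=> a /=; rewrite addn0; case: (y == a) => //.
  have S1 : {subset [:: v2] <= blk k} by move=> x; rewrite in_cons in_nil orbF => /eqP ->; exact: B2.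
  have [c' [Hc1 Hc2 HI2]] := gs [:: v2] [:: y] isT S1 erefl C1.
  apply: (fin c') => // _.
  have -> : c' v2 = y by apply: (Hc2 0%N).
  rewrite (Hc1 v1) ?B1 //; exact: hE'.
- have HV1k : v1 \in U k by apply: U_S_or => //; rewrite B1.
  have HV2k : v2 \in U k by apply: U_S_or => //; rewrite B2.
  have EX : X = c v1 + c v2 by rewrite /X HP HV1k HV2k.
  have [c' [Hc1 _ HI2]] := gs [::] [::] isT (fun x (H : x \in [::]) => ltac:(by [])) erefl (fun a => leq0n _).
  apply: (fin c') => // _.
  rewrite (Hc1 v1) ?B1 // (Hc1 v2) ?B2 // -EX -hD; exact: HwX.
Qed.

Lemma step1 k c bV SV bE SE : (k < size s)%N -> Inv6 k c bV SV bE SE -> Cond k c SV SE ->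
  (q %% 4 = 1)%N -> (k %% 4 = 1)%N -> #|SV| = 2%N -> #|SE| = 1%N ->
  exists c', Inv k.+1 c'.
Proof.
move=> Hk HI HC Hq1 Hk1 HV2 HE1.
have [f Ef] : exists f, SE = [set f] by apply/cards1P; rewrite HE1.
have C1 := (HC Hq1).1 Hk1.
set c0 := c (par k); set K := c0 + sig SV; set v1 := par k.+1.
set d := ((q - 1) %/ 4)%N.
have [Hd _ Hd3] := qd_fact Hq Hq1.
have gsw : forall w : A, K + w != f -> forall l0 L0,
  uniq l0 -> {subset l0 <= blk k} -> size L0 = size l0 ->
  (forall a, count_mem a L0 <= bb d SV (~: [set w]) a)%N ->
  exists c', [/\ forall v, v \notin blk k -> c' v = c v,
    forall i, (i < size l0)%N -> c' (nth r l0 i) = nth 0 L0 i &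
    Inv6 k.+1 c' (bV + d) (~: [set w]) bE (K + w |: SE)].
  move=> w Hw l0 L0 U0 S0 Z0 C0.
  have H1 : (4 * d + #|~: [set w]| = q + #|SV|)%N by rewrite cardC1A HV2 /d Hd3.
  have H2 : (#|~: [set w]| <= 3)%N by rewrite cardC1A.
  have H3 : forall a, a \in SV -> a \notin ~: [set w] -> (0 < d)%N by [].
  have Ht1 : K + w \notin SE by rewrite Ef inE.
  have Ht2 : K + w = c (par k) + sig SV + sig (~: [set w]) by rewrite sigC1.
  have := @gstep k c bV SV bE SE (~: [set w]) d (K + w) l0 L0 Hk HI H1 H2 H3 Ht1 Ht2 U0 S0 Z0 C0.
  by rewrite HE1.
have fin : forall w c', Inv6 k.+1 c' (bV + d) (~: [set w]) bE (K + w |: SE) ->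
    ((k.+1 < size s)%N -> w + c' v1 \notin K + w |: SE) -> exists c'', Inv k.+1 c''.
  move=> w c' HI2 HP; exists c', (bV + d)%N, (~: [set w]), bE, (K + w |: SE); split => //.
  move=> _; split; first by rewrite (mod_fact2 Hk1).
  by move=> _ Hk2; rewrite sigC1; apply: HP.
case Hc: ((k.+1 < size s)%N && (v1 \in U k)).
- move: (Hc) => /andP [Hk2 HV1].
  set x := c v1.
  have Hx : x != K by rewrite -hC; apply: C1.
  have [w Hw] := @avoidA [:: K + f; x + f] isT.
  have Hw1 : w != K + f by move: Hw; rewrite !inE negb_or => /andP [].
  have Hw2 : w != x + f by move: Hw; rewrite !inE negb_or => /andP [].
  have HKw : K + w != f by rewrite -hA.
  have [c' [Hc1 _ HI2]] := gsw w HKw [::] [::] isT (fun x (H : x \in [::]) => ltac:(by [])) erefl (fun a => leq0n _).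
  apply: (fin w c') => // _.
  have Hv1 : c' v1 = x by apply: Hc1; apply/negP => /blk_U; rewrite HV1.
  rewrite Hv1 Ef !inE negb_or; apply/andP; split.
    by rewrite hB.
  by rewrite addrC -hA.
- case Hk2: (k.+1 < size s)%N; last first.
    have [w Hw] := @avoidA [:: K + f] isT.
    have HKw : K + w != f by rewrite -hA; move: Hw; rewrite !inE.
    have [c' [Hc1 _ HI2]] := gsw w HKw [::] [::] isT (fun x (H : x \in [::]) => ltac:(by [])) erefl (fun a => leq0n _).
    by apply: (fin w c') => //; rewrite Hk2.
  have HV1 : v1 \notin U k by move: Hc; rewrite Hk2 /= => ->.
  have B1 : v1 \in blk k.
    by have := par_U Hk2; rewrite -/v1 (U_S Hk) in_setU (negbTE HV1).
  have [w Hw] := @avoidA [:: K + f] isT.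
  have HKw : K + w != f by rewrite -hA; move: Hw; rewrite !inE.
  have [y Hy] := @avoidA [:: w; w + f; K] isT.
  have Hy1 : y != w by move: Hy; rewrite !inE !negb_or => /and3P [].
  have Hy2 : y != w + f by move: Hy; rewrite !inE !negb_or => /and3P [].
  have Hy3 : y != K by move: Hy; rewrite !inE !negb_or => /and3P [].
  have C0 : forall a, (count_mem a [:: y] <= bb d SV (~: [set w]) a)%N.
    move=> a /=; rewrite addn0; case: (eqVneq y a) => [<-|] //=.
    rewrite /bb in_setC in_set1 (negbTE Hy1) /=.
    by case: (y \in SV) => //; apply: leqW.
  have S1 : {subset [:: v1] <= blk k} by move=> x; rewrite in_cons in_nil orbF => /eqP ->.
  have [c' [Hc1 Hc2 HI2]] := gsw w HKw [:: v1] [:: y] isT S1 erefl C0.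
  apply: (fin w c') => // _.
  have -> : c' v1 = y by apply: (Hc2 0%N).
  rewrite Ef !inE negb_or; apply/andP; split.
    by rewrite hB.
  by rewrite -hA.
Qed.

Lemma step k c : (k < size s)%N -> Inv k c -> exists c', Inv k.+1 c'.
Proof.
move=> Hk [bV [SV [bE [SE [HI HC]]]]].
have HI' := HI; case: HI' => [IV1 IV2 IV3 IE1 [IE2 IE3]].
have [Pk P2 P3 P0 P1] := phase Hq IV3 IE3 IV2 IE2.
case: (eqVneq (q %% 4)%N 1%N) => Hq1; last first.
  by apply: (step_gen Hk HI HC) => H; rewrite H in Hq1.
case: (ltnP (k %% 4)%N 2) => Hph; last by apply: (step_gen Hk HI HC).
have [P10 P11] := P1 Hq1.
case E: (k %% 4)%N Hph => [|[|//]] _.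
- apply: (step0 Hk HI Hq1 E); last by lia.
  by apply: P10; lia.
- apply: (step1 Hk HI HC Hq1 E); last by lia.
  by apply: P11; lia.
Qed.

Lemma Inv0 : Inv 0 (fun _ => 0).
Proof.
exists 0%N, [set (0 : A)], 0%N, (set0 : {set A}); split; last by move=> _; split => H; rewrite mod0n in H.
split.
- move=> a; rewrite /vc U0 add0n in_set1.
  case: (eqVneq a 0) => [Ea|Ha].
    have -> : [set v in [set r] | true] = [set r].
      by apply/setP => v; rewrite !inE andbT.
    by rewrite cards1.
  have -> : [set v in [set r] | false] = set0.
    by apply/setP => v; rewrite !inE andbF.
  by rewrite cards0.
- by rewrite cards1.
- by rewrite cards1.
- by move=> a; rewrite /ec take0 inE.
- by rewrite cards0.
Qed.

Lemma all_Inv k : (k <= size s)%N -> exists c, Inv k c.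
Proof.
elim: k => [|k IH] Hk; first by exists (fun _ => 0); exact: Inv0.
have [c Hc] := IH (ltnW Hk).
exact: step Hk Hc.
Qed.

Lemma final : exists c : V -> A,
  (forall a b, vc c (U (size s)) a <= vc c (U (size s)) b + 1)%N /\
  (forall a b, ec c (size s) a <= ec c (size s) b + 1)%N.
Proof.
have [c [bV [SV [bE [SE [[IV1 _ _ IE1 _] _]]]]]] := all_Inv (leqnn _).
exists c; split => a b; rewrite ?IV1 ?IE1;
  by case: (_ \in _); case: (_ \in _); lia.
Qed.

End Label.

Section Struct.
Variables (V : finType) (E : {set {set V}}) (r : V).

Definition UU (t : seq {set V}) := r |: [set v : V | has (fun e : {set V} => v \in e) t].
Definition good (t : seq {set V}) :=
  forall k, (k < size t)%N -> #|nth set0 t k :&: UU (take k t)| = 1%N.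

Lemma UU_rcons t e : UU (rcons t e) = UU t :|: e.
Proof.
apply/setP => v; rewrite !inE has_rcons.
set h := has _ _; set x := (v \in e); by case: (v == r); case: x; case: h.
Qed.

Lemma UU_nil : UU [::] = [set r].
Proof. by apply/setP => v; rewrite !inE orbF. Qed.

Lemma good_rcons t e : good t -> #|e :&: UU t| = 1%N -> good (rcons t e).
Proof.
move=> Hg He k; rewrite size_rcons ltnS leq_eqVlt => /orP [/eqP ->|Hk].
  by rewrite nth_rcons ltnn eqxx -cats1 take_size_cat.
rewrite nth_rcons Hk -cats1 takel_cat; last exact: ltnW.
exact: Hg.
Qed.

Lemma good_rconsE t e : good (rcons t e) -> good t /\ #|e :&: UU t| = 1%N.
Proof.
move=> Hg; split.
  move=> k Hk; have := Hg k; rewrite size_rcons ltnS (ltnW Hk) nth_rcons Hk.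
  by rewrite -cats1 takel_cat ?(ltnW Hk) //; apply.
have := Hg (size t); rewrite size_rcons ltnSn nth_rcons ltnn eqxx -cats1 take_size_cat //.
by apply.
Qed.

Lemma walk_cat x s1 s2 :
  walk_from E x (s1 ++ s2) = walk_from E x s1 && walk_from E (last x (map snd s1)) s2.
Proof.
elim: s1 x => [|[e y] s1 IH] x //=.
by rewrite IH !andbA.
Qed.

Lemma walk_stay t x sp : x \in UU t -> walk_from E x sp ->
  all (fun p => p.1 \in t) sp -> all (fun v => v \in UU t) (map snd sp).
Proof.
elim: sp x => [|[e y] sp IH] x //= Hx /and4P [He Hxe Hye Hw] /andP [Het Ha].
have Hy : y \in UU t by rewrite !inE; apply/orP; right; apply/hasP; exists e.
by rewrite Hy (IH y).
Qed.

Lemma path_in t : uniq t -> {subset t <= E} -> good t ->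
  forall x y, x \in UU t -> y \in UU t ->
  exists sp, [/\ is_path E x sp, last x (map snd sp) = y & all (fun p => p.1 \in t) sp].
Proof.
elim/last_ind: t => [|t e IH] Ut St Gt x y.
  rewrite UU_nil !inE => /eqP -> /eqP ->; exists [::]; split => //.
have [Gt' He] := good_rconsE Gt.
move: Ut; rewrite rcons_uniq => /andP [Het Ut'].
have St' : {subset t <= E} by move=> f Hf; apply: St; rewrite mem_rcons inE Hf orbT.
have HeE : e \in E by apply: St; rewrite mem_rcons inE eqxx.
have [z Ez] : exists z, e :&: UU t = [set z] by apply/cards1P; rewrite He.
have Hz : z \in e /\ z \in UU t by have := set11 z; rewrite -Ez inE => /andP [].
have IH' := IH Ut' St' Gt'.
have sub : forall sp, all (fun p => p.1 \in t) sp -> all (fun p => p.1 \in rcons t e) sp.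
  move=> sp; apply: sub_all => p /=; rewrite mem_rcons inE => ->; by rewrite orbT.
have fstn : forall sp, all (fun p => p.1 \in t) sp -> e \notin map (@fst {set V} V) sp.
  move=> sp Ha; apply/negP => /mapP [p Hp Ep]; move/allP: Ha => /(_ p Hp) /=.
  by rewrite -Ep (negbTE Het).
have Ein : forall v, v \in UU (rcons t e) -> v \notin UU t -> v \in e.
  by move=> v; rewrite UU_rcons in_setU => /orP [] ->.
have nz : forall v, v \in e -> v \notin UU t -> v != z.
  by move=> v _ Hv; apply/eqP => E1; rewrite E1 Hz.2 in Hv.
rewrite UU_rcons => /setUP [Hx|Hx] /setUP [Hy|Hy].
- have [sp [P1 P2 P3]] := IH' x y Hx Hy; exists sp; split => //; exact: sub.
- case: (boolP (y \in UU t)) => Hyt; first by have [sp [P1 P2 P3]] := IH' x y Hx Hyt; exists sp; split => //; exact: sub.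
  have [sp [P1 P2 P3]] := IH' x z Hx Hz.2.
  exists (rcons sp (e, y)); split.
  + move: P1; rewrite /is_path /is_walk => /and3P [W1 W2 W3].
    apply/and3P; split; first by rewrite -cats1 walk_cat W1 P2 /= HeE Hz.1 Hy.
    2: by rewrite map_rcons rcons_uniq W3 (fstn _ P3).
    rewrite map_rcons -rcons_cons rcons_uniq W2 andbT.
    apply/negP => Hin.
    have : all (fun v => v \in UU t) (x :: map snd sp) by rewrite /= Hx (walk_stay Hx W1 P3).
    by move/allP => /(_ y Hin); rewrite (negbTE Hyt).
  + by rewrite map_rcons last_rcons.
  + by rewrite all_rcons /= mem_rcons inE eqxx sub.
- case: (boolP (x \in UU t)) => Hxt.
    by have [sp [P1 P2 P3]] := IH' x y Hxt Hy; exists sp; split => //; exact: sub.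
  have [sp [P1 P2 P3]] := IH' z y Hz.2 Hy.
  exists ((e, z) :: sp); split => //.
  + move: P1; rewrite /is_path /is_walk => /and3P [W1 W2 W3].
    move: W2 => /= /andP [W2a W2b].
    rewrite /= HeE Hx Hz.1 W1 W2a W2b W3 (fstn _ P3) !andbT /=.
    apply/negP => Hin.
    have : all (fun v => v \in UU t) (z :: map snd sp) by rewrite /= Hz.2 (walk_stay Hz.2 W1 P3).
    by move/allP => /(_ x Hin); rewrite (negbTE Hxt).
  + by rewrite /= mem_rcons inE eqxx /= sub.
- case: (boolP (x \in UU t)) => Hxt.
    case: (boolP (y \in UU t)) => Hyt.
      by have [sp [P1 P2 P3]] := IH' x y Hxt Hyt; exists sp; split => //; exact: sub.
    have [sp [P1 P2 P3]] := IH' x z Hxt Hz.2.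
    exists (rcons sp (e, y)); split.
    + move: P1; rewrite /is_path /is_walk => /and3P [W1 W2 W3].
      apply/and3P; split; first by rewrite -cats1 walk_cat W1 P2 /= HeE Hz.1 Hy.
      2: by rewrite map_rcons rcons_uniq W3 (fstn _ P3).
      rewrite map_rcons -rcons_cons rcons_uniq W2 andbT.
      apply/negP => Hin.
      have : all (fun v => v \in UU t) (x :: map snd sp) by rewrite /= Hxt (walk_stay Hxt W1 P3).
      by move/allP => /(_ y Hin); rewrite (negbTE Hyt).
    + by rewrite map_rcons last_rcons.
    + by rewrite all_rcons /= mem_rcons inE eqxx sub.
  case: (eqVneq x y) => [<-|Nxy]; first by exists [::].
  case: (boolP (y \in UU t)) => Hyt.
    have [sp [P1 P2 P3]] := IH' z y Hz.2 Hyt.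
    exists ((e, z) :: sp); split => //.
    + move: P1; rewrite /is_path /is_walk => /and3P [W1 W2 W3].
      move: W2 => /= /andP [W2a W2b].
      rewrite /= HeE Hx Hz.1 W1 W2a W2b W3 (fstn _ P3) !andbT /=.
      apply/negP => Hin.
      have : all (fun v => v \in UU t) (z :: map snd sp) by rewrite /= Hz.2 (walk_stay Hz.2 W1 P3).
      by move/allP => /(_ x Hin); rewrite (negbTE Hxt).
    + by rewrite /= mem_rcons inE eqxx /= sub.
  exists [:: (e, y)]; split => //.
  + by rewrite /is_path /is_walk /= HeE Hx Hy /= inE Nxy.
  + by rewrite /= mem_rcons inE eqxx.
Qed.



Lemma no_two t e x y : (forall v0 s, ~ is_cycle E v0 s) -> uniq t -> {subset t <= E} -> good t ->
  e \in E -> e \notin t -> x \in e -> y \in e -> x \in UU t -> y \in UU t -> x = y.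
Proof.
move=> Hac Ut St Gt HeE Het Hxe Hye Hx Hy.
case: (eqVneq x y) => // Nxy; exfalso.
have [sp [P1 P2 P3]] := path_in Ut St Gt Hy Hx.
apply: (Hac y (rcons sp (e, y))).
move: P1; rewrite /is_path /is_walk => /and3P [W1 W2 W3].
have Hsp : sp != [::] by apply/eqP => E0; move: P2; rewrite E0 /= => E1; rewrite E1 eqxx in Nxy.
apply/and5P; split.
- by rewrite /is_walk -cats1 walk_cat W1 P2 /= HeE Hxe Hye.
- by rewrite size_rcons ltnS lt0n size_eq0.
- rewrite map_rcons rcons_uniq W3 andbT; apply/negP => /mapP [p Hp Ep].
  by move/allP: P3 => /(_ p Hp) /=; rewrite -Ep (negbTE Het).
- by rewrite map_rcons belast_rcons.
- by rewrite map_rcons last_rcons.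
Qed.

Lemma exit t x sp : x \in UU t -> walk_from E x sp -> last x (map snd sp) \notin UU t ->
  exists f, [/\ f \in E, f \notin t & exists w, (w \in f) && (w \in UU t)].
Proof.
elim: sp x => [|[f y] sp IH] x /= Hx; first by rewrite Hx.
move=> /and4P [HfE Hxf Hyf Hw] Hl.
case: (boolP (f \in t)) => Hft; last by exists f; split => //; exists x; rewrite Hxf Hx.
apply: (IH y) => //.
by rewrite /UU !inE; apply/orP; right; apply/hasP; exists f.
Qed.

Lemma walk_in t x sp : x \in UU t -> walk_from E x sp -> {subset E <= t} ->
  last x (map snd sp) \in UU t.
Proof.
elim: sp x => [|[f y] sp IH] x //= Hx /and4P [HfE Hxf Hyf Hw] Hs.
apply: (IH y) => //.
by rewrite /UU !inE; apply/orP; right; apply/hasP; exists f => //; apply: Hs.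
Qed.

Lemma ext t : hypertree E -> uniq t -> {subset t <= E} -> good t -> (size t < #|E|)%N ->
  exists e, [/\ e \in E, e \notin t & #|e :&: UU t| = 1%N].
Proof.
move=> [Hhg Hcon Hac _] Ut St Gt Hsz.
have : ~~ (E \subset [set x in t]).
  apply/negP => Hsub; have := subset_leq_card Hsub.
  have -> : #|[set x in t]| = size t by rewrite cardsE; apply/card_uniqP.
  by rewrite leqNgt Hsz.
case/subsetPn => e0 He0E; rewrite inE => He0t.
have [f [HfE Hft [w /andP [Hwf HwU]]]] : exists f, [/\ f \in E, f \notin t & exists w, (w \in f) && (w \in UU t)].
  case: (boolP (e0 :&: UU t == set0)) => H0; last first.
    case/set0Pn: H0 => w; rewrite inE => Hw; exists e0; split => //; by exists w.
  have /set0Pn [v Hv] := Hhg e0 He0E.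
  have HvU : v \notin UU t by apply/negP => HvU; move/eqP: H0 => /setP /(_ v); rewrite in_setI in_set0 Hv HvU.
  have [sp [Psp Lsp]] := Hcon r v.
  move: Psp; rewrite /is_path /is_walk => /and3P [W _ _].
  apply: (exit (x := r) (sp := sp)) => //; first by rewrite /UU !inE eqxx.
  by rewrite Lsp.
exists f; split => //.
have -> : f :&: UU t = [set w].
  apply/setP => v; rewrite in_setI in_set1; apply/andP/eqP => [[Hvf HvU]|->]; last by rewrite Hwf HwU.
  exact: (no_two Hac Ut St Gt HfE Hft Hvf Hwf HvU HwU).
by rewrite cards1.
Qed.

Lemma build n : hypertree E -> (n <= #|E|)%N ->
  exists t, [/\ good t, uniq t, {subset t <= E} & size t = n].
Proof.
move=> Ht; elim: n => [|n IH] Hn.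
  by exists [::]; split => // k.
have [t [Gt Ut St Szt]] := IH (ltnW Hn).
have [e [HeE Het He1]] := ext Ht Ut St Gt (ltac:(by rewrite Szt)).
exists (rcons t e); split.
- exact: good_rcons.
- by rewrite rcons_uniq Het.
- by move=> f; rewrite mem_rcons inE => /orP [/eqP ->|/St].
- by rewrite size_rcons Szt.
Qed.

End Struct.

Lemma card_filter (T : finType) (t : seq T) (P : pred T) :
  uniq t -> #|[set x in t | P x]| = count P t.
Proof.
move=> Ut; rewrite -size_filter -(card_uniqP (filter_uniq _ Ut)).
by apply: eq_card => x; rewrite inE mem_filter andbC.
Qed.

Local Close Scope ring_scope.

Theorem theorem3 (p : nat) (V : finType) (E : {set {set V}}) :
  3 <= p -> uniform E p -> hypertree E -> cordial E.
Proof.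
move=> Hp Hu Ht.
have Ht' := Ht; case: Ht' => [Hhg Hcon Hac HE0].
have [e0 He0] : exists e0, e0 \in E by apply/set0Pn.
have [r Hr] : exists r, r \in e0 by apply/set0Pn; apply: Hhg.
have [t [Gt Ut St Szt]] := @build V E r #|E| Ht (leqnn _).
have Et : t =i E.
  have Hc : #|[set x in t]| = #|E| by rewrite cardsE (card_uniqP Ut).
  have Hs : [set x in t] \subset E by apply/subsetP => x; rewrite inE => /St.
  move=> e; have := (subset_cardP Hc Hs) e; by rewrite inE.
have Hp1 : p = (p.-1).+1 by rewrite prednK // (leq_trans _ Hp).
have Hq : (2 <= p.-1)%N by move: Hp; rewrite {1}Hp1 ltnS.
have Hgood : forall k, (k < size t)%N -> #|ed t k :&: U r t k| = 1%N.
  by move=> k Hk; rewrite UE; apply: Gt.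
have Hsz : forall k, (k < size t)%N -> #|ed t k| = (p.-1).+1.
  move=> k Hk; rewrite Hu -?Hp1 //.
  by rewrite -Et; apply: mem_nth.
have [c [Hv He]] := final Hq Hgood Hsz.
have UT : U r t (size t) = setT.
  apply/setP => v; rewrite UE take_size in_setT.
  have [sp [Psp Lsp]] := Hcon r v.
  move: Psp; rewrite /is_path /is_walk => /and3P [W _ _].
  rewrite -Lsp; apply: (@walk_in V E r t r sp) => //.
    by rewrite /UU !inE eqxx.
  by move=> f; rewrite Et.
exists c; split.
- move=> a b; have := Hv a b; rewrite /vc UT /vcount.
  have E1 : forall x : A, [set v in [set: V] | c v == x] = [set v | c v == x].
    by move=> x; apply/setP => v; rewrite !inE.
  by rewrite !E1.
- move=> a b; have := He a b; rewrite /ec take_size /ecount.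
  have E1 : forall x : A, #|[set e in E | cstar c e == x]| = count (fun e => cstar c e == x) t.
    move=> x; rewrite -card_filter //; apply: eq_card => e; by rewrite !inE Et.
  by rewrite !E1.
Qed.
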